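(* Let $G=(V,E)$ be a simple graph on $V=\{1,\dots,n\}$ with graph state $|G\rangle$, and let $$\Omega_g=\sum_{\mathbf b\in\{0,1\}^n}\bigotimes_{j=1}^n|\Phi_{c_j(\mathbf b)\,\mathbf b_j}\rangle\langle\Phi_{c_j(\mathbf b)\,\mathbf b_j}|_{O_jO_j'}$$ acting on $\mathcal H\otimes\mathcal H$, where the first copy consists of qubits $O_1,\dots,O_n$ and the second of $O_1',\dots,O_n'$. Then: (i) $\Omega_g$ is an orthogonal projector and $\mathbb F\Omega_g\mathbb F=\Omega_g$; (ii) for every $n$-qubit state $|\omega\rangle$, $\Omega_g(|G\rangle\otimes|\omega\rangle)=\langle G|\omega\rangle\,|G\rangle\otimes|G\rangle$ and $\Omega_g(|\omega\rangle\otimes|G\rangle)=\langle G|\omega\rangle\,|G\rangle\otimes|G\rangle$; in particular $\Omega_g(|G\rangle\otimes|G\rangle)=|G\rangle\otimes|G\rangle$; (iii) $\Omega_g$ is a symmetric two-copy strategy for $|G\rangle$ with $\Omega_g\mathbb P_\psi=0$ and $\Omega_g\mathbb P_s\mathbb P_\psi=0$ (where $|\psi\rangle=|G\rangle$), hence $\lambda_\star(\Omega_g)=\gamma_\star(\Omega_g)=\xi_\star(\Omega_g)=0$.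
   Context: $\mathcal H=(\mathbb C^2)^{\otimes n}$. The graph state is $|G\rangle=\prod_{\{u,v\}\in E}CZ_{uv}|+\rangle^{\otimes n}$. For $\mathbf b\in\{0,1\}^n$ (a ''graph code''), the parity code $c(\mathbf b)\in\{0,1\}^n$ is $c_u(\mathbf b)=\sum_{v:\{u,v\}\in E}\mathbf b_v \bmod 2$. For $z,x\in\{0,1\}$, $|\Phi_{zx}\rangle=(\mathbb I\otimes X^xZ^z)(|00\rangle+|11\rangle)/\sqrt2$. On $\mathcal H\otimes\mathcal H$ (two copies) let $\mathbb F$ be the swap operator $\mathbb F(|x\rangle\otimes|y\rangle)=|y\rangle\otimes|x\rangle$, $\mathbb I$ the identity, $\mathbb P_s=(\mathbb F+\mathbb I)/2$ and $\mathbb P_\psi=|\psi\rangle\langle\psi|\otimes(\mathbb I-|\psi\rangle\langle\psi|)$. A symmetric two-copy strategy for $|\psi\rangle$ is an operator $\Omega$ on $\mathcal H\otimes\mathcal H$ with $0\le\Omega\le\mathbb I$, $\Omega(|\psi\rangle\otimes|\psi\rangle)=|\psi\rangle\otimes|\psi\rangle$ and $\mathbb F\Omega\mathbb F=\Omega$. Define $\lambda_\star(\Omega)$ as the largest eigenvalue of the Hermitian operator $2\mathbb P_\psi\mathbb P_s\Omega\mathbb P_s\mathbb P_\psi$, $\gamma_\star(\Omega)$ as the largest eigenvalue of $\mathbb P_\psi\mathbb F\Omega\mathbb P_\psi$, and $\xi_\star(\Omega)$ as the largest eigenvalue of $\mathbb P_\psi(\tfrac12\mathbb F+\mathbb I)\Omega\mathbb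 P_\psi$. *)

(* Defs.v *)
From HB Require Import structures.
From mathcomp Require Import all_boot all_order all_algebra.
From mathcomp Require Import algC.
From mathcomp Require Export mxtens.
Set Implicit Arguments. Unset Strict Implicit. Unset Printing Implicit Defensive.
Import Order.TTheory GRing.Theory Num.Theory.
Local Open Scope ring_scope.

(* Tensor (Kronecker) product of matrices: mathcomp-real-closed's tensmx.
   Index convention: mxtens_index (i, j) = i * dim2 + j. *)
Notation "A *t B" := (tensmx A B) (at level 40, left associativity).

Definition dag {m n} (A : 'M[algC]_(m, n)) : 'M[algC]_(n, m) :=
  (map_mx Num.conj A)^T.

Definition psd {m} (A : 'M[algC]_m) : Prop :=
  dag A = A /\ forall v : 'cV[algC]_m, 0 <= (dag v *m A *m v) 0 0.

Definition orth_proj {m} (A : 'M[algC]_m) : Prop := A *m A = A /\ dag A = A.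

Definition braket {m} (u v : 'cV[algC]_m) : algC := (dag u *m v) 0 0.
Definition is_state {m} (u : 'cV[algC]_m) : Prop := braket u u = 1.

(* ---------------- n qubits ----------------
   The Hilbert space (C^2)^{(x) n} is 'cV_(2^n); qubit j (j : 'I_n) of the
   basis vector with index i : 'I_(2^n) is bit j of i. *)
Definition bit {n} (j : 'I_n) (i : 'I_(2 ^ n)) : bool := odd (i %/ 2 ^ j).

Definition plus_state n : 'cV[algC]_(2 ^ n) :=
  const_mx (sqrtC (2 ^ n)%:R)^-1.

Definition CZ {n} (u v : 'I_n) : 'M[algC]_(2 ^ n) :=
  diag_mx (\row_i (-1) ^+ (bit u i && bit v i)).

(* A simple graph on V = 'I_n (vertices 1..n relabeled 0..n-1):
   a symmetric irreflexive adjacency relation. *)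
Definition simple_graph {n} (adj : rel 'I_n) : Prop :=
  irreflexive adj /\ symmetric adj.

Definition edges {n} (adj : rel 'I_n) : seq ('I_n * 'I_n) :=
  [seq e : 'I_n * 'I_n <- [seq (u, v) | u <- enum 'I_n, v <- enum 'I_n] | (e.1 < e.2)%N && adj e.1 e.2].

Definition graph_state {n} (adj : rel 'I_n) : 'cV[algC]_(2 ^ n) :=
  foldr (fun e A => CZ e.1 e.2 *m A) 1%:M (edges adj) *m plus_state n.

Definition parity_code {n} (adj : rel 'I_n) (b : {ffun 'I_n -> bool})
  (u : 'I_n) : bool :=
  odd (\sum_(v | adj u v) (b v : nat)).

Definition ob (b : bool) : 'I_2 := inord (nat_of_bool b).
Definition PauliX : 'M[algC]_2 := \matrix_(i, j) ((i != j)%:R).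
Definition PauliZ : 'M[algC]_2 :=
  \matrix_(i, j) ((i == j)%:R * (-1) ^+ (nat_of_ord i)).

(* (|00> + |11>)/sqrt 2 on C^2 (x) C^2 *)
Definition bell : 'cV[algC]_(2 * 2) :=
  \col_k (((mxtens_unindex k).1 == (mxtens_unindex k).2)%:R / sqrtC 2).

Definition Phi (z x : bool) : 'cV[algC]_(2 * 2) :=
  (1%:M *t (PauliX ^+ x *m PauliZ ^+ z)) *m bell.

(* ---------------- two copies ----------------
   H (x) H = 'cV_(2^n * 2^n); the basis index mxtens_index (u, u') has
   first-copy index u (qubits O_1..O_n) and second-copy index u'
   (qubits O_1'..O_n'). *)
Definition copy1 {n} (k : 'I_(2 ^ n * 2 ^ n)) : 'I_(2 ^ n) := (mxtens_unindex k).1.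
Definition copy2 {n} (k : 'I_(2 ^ n * 2 ^ n)) : 'I_(2 ^ n) := (mxtens_unindex k).2.

Definition swapF n : 'M[algC]_(2 ^ n * 2 ^ n) :=
  \matrix_(k, l) ((copy1 k == copy2 l) && (copy2 k == copy1 l))%:R.

Definition Psym n : 'M[algC]_(2 ^ n * 2 ^ n) := 2^-1 *: (swapF n + 1%:M).

Definition Ppsi {n} (psi : 'cV[algC]_(2 ^ n)) : 'M[algC]_(2 ^ n * 2 ^ n) :=
  (psi *m dag psi) *t (1%:M - psi *m dag psi).

(* Omega_g = sum_b (x)_{j} |Phi_{c_j(b) b_j}><Phi_{c_j(b) b_j}|_{O_j O_j'},
   written out entrywise: the factor for the pair (O_j, O_j') reads bit j of
   the first-copy index and bit j of the second-copy index. *)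
Definition Omega_g {n} (adj : rel 'I_n) : 'M[algC]_(2 ^ n * 2 ^ n) :=
  \matrix_(k, l) \sum_(b : {ffun 'I_n -> bool})
     \prod_(j < n)
       (Phi (parity_code adj b j) (b j)
              (mxtens_index (ob (bit j (copy1 k)), ob (bit j (copy2 k)))) 0
        * Num.conj (Phi (parity_code adj b j) (b j)
              (mxtens_index (ob (bit j (copy1 l)), ob (bit j (copy2 l)))) 0)).

Definition sym_two_copy_strategy {n} (psi : 'cV[algC]_(2 ^ n))
  (Om : 'M[algC]_(2 ^ n * 2 ^ n)) : Prop :=
  [/\ psd Om, psd (1%:M - Om), Om *m (psi *t psi) = psi *t psi
    & swapF n *m Om *m swapF n = Om].

Definition largest_eigenvalue {m} (A : 'M[algC]_m) (l : algC) : Prop :=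
  eigenvalue A l /\ forall a, eigenvalue A a -> a <= l.

Definition lambda_star {n} (psi : 'cV[algC]_(2 ^ n)) (Om : 'M[algC]_(2 ^ n * 2 ^ n)) l :=
  largest_eigenvalue (2%:R *: (Ppsi psi *m Psym n *m Om *m Psym n *m Ppsi psi)) l.
Definition gamma_star {n} (psi : 'cV[algC]_(2 ^ n)) (Om : 'M[algC]_(2 ^ n * 2 ^ n)) l :=
  largest_eigenvalue (Ppsi psi *m swapF n *m Om *m Ppsi psi) l.
Definition xi_star {n} (psi : 'cV[algC]_(2 ^ n)) (Om : 'M[algC]_(2 ^ n * 2 ^ n)) l :=
  largest_eigenvalue
    (Ppsi psi *m (2^-1 *: swapF n + 1%:M) *m Om *m Ppsi psi) l.

(* Main.v *)
Require Import Defs.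
From HB Require Import structures.
From mathcomp Require Import all_boot all_order all_algebra.
From mathcomp Require Import algC.
From mathcomp Require Import mxtens.
Import GRing.Theory Num.Theory.
From mathcomp Require Import ring.
Local Open Scope ring_scope.
Lemma bits_inj (n u v : nat) : (u < 2 ^ n)%N -> (v < 2 ^ n)%N ->
  (forall j, (j < n)%N -> odd (u %/ 2 ^ j) = odd (v %/ 2 ^ j)) -> u = v.
Proof.
elim: n u v => [|n IH] u v.
  by rewrite expn0 !ltnS !leqn0 => /eqP-> /eqP->.
move=> hu hv h.
have h0 : odd u = odd v by have := h 0%N isT; rewrite expn0 !divn1.
have hu2 : (u %/ 2 < 2 ^ n)%N by rewrite ltn_divLR // mulnC -expnS.
have hv2 : (v %/ 2 < 2 ^ n)%N by rewrite ltn_divLR // mulnC -expnS.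
have e : (u %/ 2 = v %/ 2)%N.
  apply: IH => // j hj; rewrite -!divnMA -expnS; exact: h.
by rewrite (div.divn_eq u 2) (div.divn_eq v 2) e !modn2 h0.
Qed.

Definition beta {n} (u : 'I_(2 ^ n)) : {ffun 'I_n -> bool} := [ffun j => bit j u].

Lemma beta_inj n : injective (@beta n).
Proof.
move=> u v /ffunP h; apply: val_inj; apply: (@bits_inj n); rewrite ?ltn_ord // => j hj.
by have := h (Ordinal hj); rewrite !ffunE.
Qed.

Lemma beta_bij n : bijective (@beta n).
Proof.
apply: inj_card_bij; first exact: beta_inj.
by rewrite card_ffun card_bool !card_ord.
Qed.

Lemma sum_beta n (F : {ffun 'I_n -> bool} -> algC) :
  \sum_(u : 'I_(2 ^ n)) F (beta u) = \sum_f F f.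
Proof.
case: (beta_bij n) => g h1 h2.
rewrite (reindex beta) //; exists g => x _; [exact: h1|exact: h2].
Qed.

Lemma sum_pair m k (F : 'I_(m * k) -> algC) :
  \sum_(x : 'I_(m * k)) F x = \sum_(i < m) \sum_(j < k) F (mxtens_index (i, j)).
Proof.
rewrite pair_big /= (reindex (@mxtens_unindex m k)) /=.
  by apply: eq_bigr => x _; exact: (congr1 F (esym (mxtens_unindexK x))).
by exists (@mxtens_index m k) => i _; rewrite (mxtens_indexK, mxtens_unindexK).
Qed.

Lemma sum_prod_bits n (h : 'I_n -> bool -> algC) :
  \sum_(u : 'I_(2 ^ n)) \prod_(j < n) h j (bit j u) =
  \prod_(j < n) (h j false + h j true).
Proof.
transitivity (\sum_(u : 'I_(2 ^ n)) \prod_(j < n) h j (beta u j)).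
  by apply: eq_bigr => u _; apply: eq_bigr => j _; rewrite ffunE.
rewrite (@sum_beta n (fun f => \prod_(j < n) h j (f j))).
rewrite -bigA_distr_bigA /=; apply: eq_bigr => j _.
by rewrite big_bool addrC.
Qed.
Lemma obK b : nat_of_ord (ob b) = b.
Proof. by rewrite /ob inordK //; case: b. Qed.

Lemma ob_eq a c : (ob a == ob c) = (a == c).
Proof.
apply/eqP/eqP => [h|->//]; move/(congr1 val): h; rewrite /= !obK.
by case: a; case: c.
Qed.

Lemma one2E (i j : 'I_2) : (1 : 'M[algC]_2) i j = (i == j)%:R.
Proof. by rewrite mxE. Qed.

Lemma PhiE0 z x (a c : 'I_2) :
  Phi z x (mxtens_index (a, c)) 0 = (PauliX ^+ x *m PauliZ ^+ z) c a / sqrtC 2.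
Proof.
rewrite /Phi mxE sum_pair.
rewrite (bigD1 a) //= [X in _ + X]big1 ?addr0; last first.
  move=> i /negbTE hi.
  by apply: big1 => j _; rewrite tensmxE mxE eq_sym hi mul0r mul0r.
rewrite (bigD1 a) //= [X in _ + X]big1 ?addr0; last first.
  move=> j /negbTE hj.
  by rewrite tensmxE !mxE !mxtens_indexK /= eq_sym hj !mul0r mulr0.
by rewrite tensmxE !mxE !mxtens_indexK /= eqxx !mul1r.
Qed.

Definition phi (z x a c : bool) : algC :=
  ((c == (a (+) x))%:R * (-1) ^+ (z && a)) / sqrtC 2.

Lemma PauliZ_diag : PauliZ = diag_mx (\row_(i < 2) (-1) ^+ (nat_of_ord i)).
Proof.
apply/matrixP => i j; rewrite !mxE; case: (eqVneq i j) => [->|h].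
  by rewrite mul1r mulr1n.
by rewrite mul0r mulr0n.
Qed.

Lemma PhiE z x a c : Phi z x (mxtens_index (ob a, ob c)) 0 = phi z x a c.
Proof.
rewrite PhiE0 /phi; congr (_ / _).
case: z; case: x; rewrite ?expr0 ?expr1.
all: rewrite ?mulmx1 ?mul1mx ?PauliZ_diag ?mul_mx_diag !mxE ?ob_eq ?obK.
all: by case: a; case: c; rewrite /= ?mulr1 ?mul1r ?mul0r ?mulr0n ?mulr1n.
Qed.
Lemma dag_mul m k p (A : 'M[algC]_(m, k)) (B : 'M[algC]_(k, p)) :
  dag (A *m B) = dag B *m dag A.
Proof.
apply/matrixP => i j; rewrite !mxE rmorph_sum; apply: eq_bigr => l _.
by rewrite !mxE rmorphM mulrC.
Qed.

Lemma dagK m k (A : 'M[algC]_(m, k)) : dag (dag A) = A.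
Proof. by apply/matrixP => i j; rewrite !mxE conjCK. Qed.

Lemma dag_sum m k (I : finType) (F : I -> 'M[algC]_(m, k)) :
  dag (\sum_i F i) = \sum_i dag (F i).
Proof.
apply/matrixP => i j; rewrite !mxE !summxE rmorph_sum.
by apply: eq_bigr => l _; rewrite !mxE.
Qed.

Lemma dagB m (A B : 'M[algC]_m) : dag (A - B) = dag A - dag B.
Proof. by apply/matrixP => i j; rewrite !mxE rmorphB. Qed.

Lemma dag1 m : dag (1%:M : 'M[algC]_m) = 1%:M.
Proof. by apply/matrixP => i j; rewrite !mxE rmorph_nat eq_sym. Qed.

Lemma sqrt2_conj : (sqrtC 2 : algC)^* = sqrtC 2.
Proof. by rewrite geC0_conj // sqrtC_ge0 ler0n. Qed.

Lemma conj_phi z x a c : (phi z x a c)^* = phi z x a c.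
Proof.
rewrite /phi fmorph_div rmorphM rmorph_nat rmorphXn rmorphN1; congr (_ / _); exact: sqrt2_conj.
Qed.

Lemma sqrt2_sq : (sqrtC 2 : algC) * sqrtC 2 = 2.
Proof. by rewrite -expr2 sqrtCK. Qed.

Lemma sqrt2_neq0 : (sqrtC 2 : algC) != 0.
Proof. by rewrite sqrtC_eq0 pnatr_eq0. Qed.

Lemma phi_orth z x z' x' :
  phi z x false false * phi z' x' false false + phi z x false true * phi z' x' false true +
  (phi z x true false * phi z' x' true false + phi z x true true * phi z' x' true true)
  = ((z == z') && (x == x'))%:R.
Proof.
rewrite /phi !mulf_div sqrt2_sq.
have h2 : (2 : algC) != 0 by rewrite pnatr_eq0.
by case: z; case: z'; case: x; case: x'; rewrite /= ?expr0 ?expr1; field.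
Qed.

Lemma prod_bool (I : finType) (P : pred I) :
  \prod_(j : I) ((P j)%:R : algC) = ([forall j, P j])%:R.
Proof.
case: (boolP [forall j, P j]) => [/forallP h | /forallPn [j hj]].
  by apply: big1 => j _; rewrite h.
by rewrite (bigD1 j) //= (negbTE hj) mul0r.
Qed.

Definition vb {n} (adj : rel 'I_n) (b : {ffun 'I_n -> bool}) : 'cV[algC]_(2 ^ n * 2 ^ n) :=
  \col_k \prod_(j < n) phi (parity_code adj b j) (b j) (bit j (copy1 k)) (bit j (copy2 k)).

Lemma conj_vb n (adj : rel 'I_n) b k i : (vb adj b k i)^* = vb adj b k i.
Proof.
rewrite !mxE rmorph_prod; apply: eq_bigr => j _; exact: conj_phi.
Qed.

Lemma OmE_entry n (adj : rel 'I_n) k l :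
  Omega_g adj k l = \sum_b vb adj b k 0 * vb adj b l 0.
Proof.
rewrite mxE; apply: eq_bigr => b _; rewrite !mxE -big_split /=.
by apply: eq_bigr => j _; rewrite !PhiE conj_phi.
Qed.

Lemma OmE n (adj : rel 'I_n) :
  Omega_g adj = \sum_b vb adj b *m dag (vb adj b).
Proof.
apply/matrixP => k l; rewrite OmE_entry summxE; apply: eq_bigr => b _.
by rewrite [RHS]mxE big_ord1 [dag _ _ _]mxE [map_mx _ _ _ _]mxE conj_vb.
Qed.

Lemma vb_orth n (adj : rel 'I_n) b b' :
  dag (vb adj b) *m vb adj b' = ((b == b')%:R)%:M.
Proof.
apply/matrixP => i i'; rewrite !ord1 [RHS]mxE eqxx mulr1n mxE sum_pair.
pose g (j : 'I_n) (x y : bool) :=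
  phi (parity_code adj b j) (b j) x y * phi (parity_code adj b' j) (b' j) x y.
transitivity (\sum_(u1 < 2 ^ n) \sum_(u2 < 2 ^ n)
                \prod_(j < n) g j (bit j u1) (bit j u2)).
  apply: eq_bigr => u1 _; apply: eq_bigr => u2 _.
  rewrite [dag _ _ _]mxE [map_mx _ _ _ _]mxE conj_vb !mxE -big_split /=.
  by apply: eq_bigr => j _; rewrite /copy1 /copy2 mxtens_indexK.
transitivity (\sum_(u1 < 2 ^ n) \prod_(j < n) (g j (bit j u1) false + g j (bit j u1) true)).
  by apply: eq_bigr => u1 _; rewrite (@sum_prod_bits n (fun j y => g j (bit j u1) y)).
rewrite (@sum_prod_bits n (fun j x => g j x false + g j x true)).
under eq_bigr do rewrite /g phi_orth.
rewrite prod_bool; congr ((nat_of_bool _)%:R).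
apply/idP/idP => [/forallP h|/eqP ->]; last by apply/forallP => j; rewrite !eqxx.
by apply/eqP/ffunP => j; have /andP[_ /eqP] := h j.
Qed.
Lemma Om_idem n (adj : rel 'I_n) : Omega_g adj *m Omega_g adj = Omega_g adj.
Proof.
rewrite [in RHS]OmE {1}OmE mulmx_suml; apply: eq_bigr => b _.
rewrite OmE mulmx_sumr (bigD1 b) //= big1 ?addr0.
  by rewrite mulmxA -[(vb adj b *m _) *m _]mulmxA vb_orth eqxx mul_mx_scalar scale1r.
move=> b' hb; rewrite eq_sym in hb; move/negbTE: hb => hb.
by rewrite mulmxA -[(vb adj b *m _) *m _]mulmxA vb_orth hb mul_mx_scalar scale0r mul0mx.
Qed.

Lemma Om_herm n (adj : rel 'I_n) : dag (Omega_g adj) = Omega_g adj.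
Proof.
by rewrite OmE dag_sum; apply: eq_bigr => b _; rewrite dag_mul dagK.
Qed.

Lemma proj_psd m (A : 'M[algC]_m) : orth_proj A -> psd A.
Proof.
case=> hAA hA; split => // v.
have -> : dag v *m A *m v = dag (A *m v) *m (A *m v).
  by rewrite dag_mul hA -{1}hAA !mulmxA.
rewrite mxE; apply: sumr_ge0 => i _; rewrite mxE [map_mx _ _ _ _]mxE mulrC.
exact: mul_conjC_ge0.
Qed.

Lemma proj_compl m (A : 'M[algC]_m) : orth_proj A -> orth_proj (1%:M - A).
Proof.
case=> hAA hA; split; last by rewrite dagB dag1 hA.
by rewrite mulmxBl !mulmxBr !mul1mx ?mulmx1 hAA subrr subr0.
Qed.
Definition fxor {n} (f b : {ffun 'I_n -> bool}) : {ffun 'I_n -> bool} :=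
  [ffun j => f j (+) b j].
Definition sg {n} (adj : rel 'I_n) (f : {ffun 'I_n -> bool}) : algC :=
  \prod_(e <- edges adj) (-1) ^+ (f e.1 && f e.2).
Definition eps {n} (adj : rel 'I_n) (b f : {ffun 'I_n -> bool}) : algC :=
  \prod_(j < n) (-1) ^+ (parity_code adj b j && f j).

Lemma sign_sq (b : bool) : (-1) ^+ b * (-1) ^+ b = 1 :> algC.
Proof. by case: b; rewrite ?expr0 ?expr1 ?mulr1 // mulrNN mulr1. Qed.

Lemma sg_sq n (adj : rel 'I_n) f : sg adj f * sg adj f = 1.
Proof. by rewrite /sg -big_split /=; apply: big1 => e _; rewrite sign_sq. Qed.

Lemma conj_sg n (adj : rel 'I_n) f : (sg adj f)^* = sg adj f.
Proof.
rewrite /sg rmorph_prod; apply: eq_bigr => e _; by rewrite rmorphXn rmorphN1.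
Qed.

Lemma sign_xor4 x1 x2 y1 y2 :
  (-1) ^+ ((x1 (+) y1) && (x2 (+) y2)) =
  (-1) ^+ (x1 && x2) * (-1) ^+ (y1 && y2) *
  ((-1) ^+ (x1 && y2) * (-1) ^+ (y1 && x2)) :> algC.
Proof.
by case: x1; case: x2; case: y1; case: y2; rewrite /= ?expr0 ?expr1; ring.
Qed.

Lemma sg_xor n (adj : rel 'I_n) f b :
  sg adj (fxor f b) = sg adj f * sg adj b *
    \prod_(e <- edges adj) ((-1) ^+ (f e.1 && b e.2) * (-1) ^+ (b e.1 && f e.2)).
Proof.
rewrite /sg -!big_split /=; apply: eq_bigr => e _; by rewrite !ffunE sign_xor4.
Qed.

Lemma sign_odd_sum n (P : pred 'I_n) (a : 'I_n -> bool) (x : bool) :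
  (-1) ^+ (odd (\sum_(v | P v) (a v : nat)) && x) =
  \prod_(v | P v) (-1) ^+ (x && a v) :> algC.
Proof.
case: x; last by rewrite andbF expr0 big1.
rewrite andbT signr_odd.
by rewrite (big_morph (fun k : nat => (-1) ^+ k : algC) (exprD (-1)) (expr0 (-1))).
Qed.

Lemma big_enum_ord n (F : 'I_n -> algC) :
  \prod_(i <- enum 'I_n) F i = \prod_(i < n) F i.
Proof. by rewrite big_enum. Qed.

Lemma eps_C n (adj : rel 'I_n) (Hg : simple_graph adj) f b :
  eps adj b f =
  \prod_(e <- edges adj) ((-1) ^+ (f e.1 && b e.2) * (-1) ^+ (b e.1 && f e.2)).
Proof.
case: Hg => Hirr Hsym.
pose g (u v : 'I_n) : algC := (-1) ^+ (f u && b v).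
transitivity (\prod_(u < n) \prod_(v < n) (if adj u v then g u v else 1)).
  by apply: eq_bigr => j _; rewrite sign_odd_sum big_mkcond.
have hsplit : forall u v : 'I_n, (if adj u v then g u v else 1) =
  (if (u < v)%N && adj u v then g u v else 1) *
  (if (v < u)%N && adj u v then g u v else 1).
  move=> u v; case: (ltngtP u v) => h /=; rewrite ?mulr1 ?mul1r //.
  all: try by case: ifP; rewrite ?mulr1 ?mul1r.
  have e : u = v :> 'I_n by apply: val_inj.
  by rewrite e Hirr.
rewrite (eq_bigr (fun u : 'I_n => \prod_(v < n) ((if (u < v)%N && adj u v then g u v else 1) *
  (if (v < u)%N && adj u v then g u v else 1)))); last first.
  by move=> u _; apply: eq_bigr => v _; exact: hsplit.
under eq_bigr do rewrite big_split /=.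
rewrite big_split /= [X in _ * X]exchange_big /=.
rewrite /edges big_filter [RHS]big_mkcond big_allpairs_dep /=.
rewrite big_enum_ord.
rewrite -big_split /=; apply: eq_bigr => u _.
rewrite big_enum /= -big_split /=; apply: eq_bigr => v _.
rewrite /g Hsym andbC; case: ifP => _; rewrite ?mulr1 //.
by rewrite [f v && _]andbC.
Qed.
Lemma stab n (adj : rel 'I_n) (Hg : simple_graph adj) b f :
  eps adj b f * sg adj f = sg adj b * sg adj (fxor f b).
Proof.
rewrite sg_xor (@eps_C n adj Hg).
set C := \prod_(e <- _) _.
transitivity ((sg adj b * sg adj b) * (sg adj f * C)); last by ring.
by rewrite sg_sq mul1r mulrC.
Qed.

Lemma fxorK n (f b : {ffun 'I_n -> bool}) : fxor (fxor f b) b = f.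
Proof. by apply/ffunP => j; rewrite !ffunE addbK. Qed.

Lemma fxorKl n (f b : {ffun 'I_n -> bool}) : fxor f (fxor f b) = b.
Proof. by apply/ffunP => j; rewrite !ffunE addKb. Qed.

Lemma fxor_eq n (x f b : {ffun 'I_n -> bool}) : (x == fxor f b) = (b == fxor f x).
Proof. by apply/eqP/eqP => ->; rewrite fxorKl. Qed.

Lemma fxor_eq2 n (x f b : {ffun 'I_n -> bool}) : (x == fxor f b) = (f == fxor x b).
Proof. by apply/eqP/eqP => ->; rewrite fxorK. Qed.

Lemma sum_delta (T : finType) (a : T) (P : pred T) (F : T -> algC) :
  (forall f, P f = (f == a)) -> \sum_f (P f)%:R * F f = F a.
Proof.
move=> hP; rewrite (bigD1 a) //= hP eqxx mul1r big1 ?addr0 // => f /negbTE h.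
by rewrite hP h mul0r.
Qed.

Lemma foldr_CZ n (l : seq ('I_n * 'I_n)) :
  foldr (fun e A => CZ e.1 e.2 *m A) 1%:M l =
  diag_mx (\row_i \prod_(e <- l) (-1) ^+ (bit e.1 i && bit e.2 i)) :> 'M[algC]_(2 ^ n).
Proof.
elim: l => [|e l IH] /=.
  by apply/matrixP => i j; rewrite !mxE big_nil.
rewrite IH /CZ mulmx_diag; congr diag_mx; apply/rowP => i.
by rewrite !mxE big_cons.
Qed.

Definition sp n : algC := (sqrtC (2 ^ n)%:R)^-1.
Definition tt : algC := (sqrtC 2)^-1.

Lemma G_entry n (adj : rel 'I_n) u i :
  graph_state adj u i = sp n * sg adj (beta u).
Proof.
rewrite /graph_state foldr_CZ mul_diag_mx !mxE mulrC; congr (_ * _).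
by apply: eq_bigr => e _; rewrite !ffunE.
Qed.

Lemma sp_ge0 n : 0 <= sp n.
Proof. by rewrite /sp invr_ge0 sqrtC_ge0 ler0n. Qed.

Lemma conj_G n (adj : rel 'I_n) u i : (graph_state adj u i)^* = graph_state adj u i.
Proof.
rewrite G_entry rmorphM; congr (_ * _); [exact: geC0_conj (sp_ge0 n)|exact: conj_sg].
Qed.

Lemma sp_sq n : sp n * sp n = ((2 ^ n)%:R)^-1.
Proof. by rewrite /sp -invfM -expr2 sqrtCK. Qed.

Lemma tt_sq n : tt ^+ n * tt ^+ n = sp n * sp n.
Proof.
rewrite sp_sq -exprMn /tt -invfM -expr2 sqrtCK natrX exprVn //.
Qed.

Lemma vbE n (adj : rel 'I_n) b k i :
  vb adj b k i = (beta (copy2 k) == fxor (beta (copy1 k)) b)%:R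
                 * eps adj b (beta (copy1 k)) * tt ^+ n.
Proof.
rewrite mxE /phi big_split /= big_split /= prod_bool prodr_const card_ord.
congr (_ * _ * _).
  congr ((nat_of_bool _)%:R).
  apply/forallP/eqP => [h|h j].
    by apply/ffunP => j; rewrite !ffunE; apply/eqP; exact: h.
  by move/ffunP: h => /(_ j); rewrite !ffunE => ->.
by rewrite /eps; apply: eq_bigr => j _; rewrite ffunE.
Qed.
Lemma inner n (adj : rel 'I_n) (Hg : simple_graph adj) b (w : 'I_(2 ^ n) -> algC) :
  \sum_(m : 'I_(2 ^ n * 2 ^ n)) vb adj b m 0 * (graph_state adj (copy1 m) 0 * w (copy2 m))
  = tt ^+ n * sp n * sg adj b * \sum_(u : 'I_(2 ^ n)) sg adj (beta u) * w u.
Proof.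
rewrite sum_pair exchange_big /= mulr_sumr; apply: eq_bigr => u2 _.
transitivity (\sum_(u1 : 'I_(2 ^ n)) (beta u2 == fxor (beta u1) b)%:R *
   (eps adj b (beta u1) * tt ^+ n * (sp n * sg adj (beta u1) * w u2))).
  apply: eq_bigr => u1 _.
  by rewrite vbE G_entry /copy1 /copy2 !mxtens_indexK /= !mulrA.
rewrite (@sum_beta n (fun f => (beta u2 == fxor f b)%:R *
   (eps adj b f * tt ^+ n * (sp n * sg adj f * w u2)))).
rewrite (@sum_delta _ (fxor (beta u2) b)) => [|f]; last exact: fxor_eq2.
transitivity (tt ^+ n * sp n * w u2 *
   (eps adj b (fxor (beta u2) b) * sg adj (fxor (beta u2) b))); first by ring.
by rewrite stab // fxorK; ring.
Qed.

Lemma outer n (adj : rel 'I_n) (Hg : simple_graph adj) k :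
  \sum_b vb adj b k 0 * sg adj b =
  tt ^+ n * sg adj (beta (copy1 k)) * sg adj (beta (copy2 k)).
Proof.
set f1 := beta (copy1 k); set f2 := beta (copy2 k).
transitivity (\sum_b (f2 == fxor f1 b)%:R * (eps adj b f1 * tt ^+ n * sg adj b)).
  by apply: eq_bigr => b _; rewrite vbE !mulrA.
rewrite (@sum_delta _ (fxor f1 f2)) => [|b]; last exact: fxor_eq.
have h := @stab n adj Hg (fxor f1 f2) f1; rewrite fxorKl in h.
rewrite -[LHS]mulr1 -(@sg_sq n adj f1).
transitivity (tt ^+ n * sg adj f1 *
  ((eps adj (fxor f1 f2) f1 * sg adj f1) * sg adj (fxor f1 f2))); first by ring.
rewrite h.
transitivity (tt ^+ n * sg adj f1 * sg adj f2 *
  (sg adj (fxor f1 f2) * sg adj (fxor f1 f2))); first by ring.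
by rewrite sg_sq mulr1.
Qed.

Lemma key n (adj : rel 'I_n) (Hg : simple_graph adj) k (w : 'I_(2 ^ n) -> algC) :
  \sum_m Omega_g adj k m * (graph_state adj (copy1 m) 0 * w (copy2 m)) =
  (\sum_u (graph_state adj u 0)^* * w u) *
  (graph_state adj (copy1 k) 0 * graph_state adj (copy2 k) 0).
Proof.
transitivity (\sum_b vb adj b k 0 * \sum_m vb adj b m 0 *
                 (graph_state adj (copy1 m) 0 * w (copy2 m))).
  rewrite (eq_bigr (fun m => \sum_b vb adj b k 0 * vb adj b m 0 *
      (graph_state adj (copy1 m) 0 * w (copy2 m)))); last first.
    by move=> m _; rewrite OmE_entry mulr_suml.
  rewrite exchange_big /=; apply: eq_bigr => b _; rewrite mulr_sumr.
  by apply: eq_bigr => m _; rewrite -mulrA.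
under eq_bigr do rewrite inner //.
set S := \sum_(u < 2 ^ n) _.
transitivity (tt ^+ n * sp n * S * \sum_b vb adj b k 0 * sg adj b).
  by rewrite mulr_sumr; apply: eq_bigr => b _; ring.
rewrite outer //.
have -> : \sum_u (graph_state adj u 0)^* * w u = sp n * S.
  rewrite /S mulr_sumr; apply: eq_bigr => u _; by rewrite conj_G G_entry mulrA.
rewrite !G_entry.
transitivity ((tt ^+ n * tt ^+ n) * (sp n * S * sg adj (beta (copy1 k)) * sg adj (beta (copy2 k))));
  first by ring.
by rewrite tt_sq; ring.
Qed.
Definition swp {n} (k : 'I_(2 ^ n * 2 ^ n)) : 'I_(2 ^ n * 2 ^ n) :=
  mxtens_index (copy2 k, copy1 k).

Lemma copy1_swp n (k : 'I_(2 ^ n * 2 ^ n)) : copy1 (swp k) = copy2 k.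
Proof. by rewrite /copy1 /swp mxtens_indexK. Qed.
Lemma copy2_swp n (k : 'I_(2 ^ n * 2 ^ n)) : copy2 (swp k) = copy1 k.
Proof. by rewrite /copy2 /swp mxtens_indexK. Qed.

Lemma swpK n : cancel (@swp n) (@swp n).
Proof.
move=> k; rewrite {1}/swp copy1_swp copy2_swp /copy1 /copy2 -surjective_pairing.
exact: mxtens_unindexK.
Qed.

Lemma swp_eq n (k l : 'I_(2 ^ n * 2 ^ n)) :
  (l == swp k) = (copy1 k == copy2 l) && (copy2 k == copy1 l).
Proof.
rewrite -{1}(mxtens_unindexK l) /swp (inj_eq (can_inj (@mxtens_indexK _ _))).
rewrite [mxtens_unindex l]surjective_pairing xpair_eqE /copy1 /copy2.
by rewrite andbC eq_sym [_.2 == _]eq_sym.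
Qed.

Lemma swapF_entry n (k l : 'I_(2 ^ n * 2 ^ n)) : swapF n k l = (l == swp k)%:R.
Proof. by rewrite mxE swp_eq. Qed.

Lemma mulF_l n p (A : 'M[algC]_(2 ^ n * 2 ^ n, p)) k l :
  (swapF n *m A) k l = A (swp k) l.
Proof.
rewrite mxE (eq_bigr (fun m => (m == swp k)%:R * A m l)); last first.
  by move=> m _; rewrite swapF_entry.
by rewrite (@sum_delta _ (swp k)).
Qed.

Lemma mulF_r n p (A : 'M[algC]_(p, 2 ^ n * 2 ^ n)) k l :
  (A *m swapF n) k l = A k (swp l).
Proof.
rewrite mxE (eq_bigr (fun m => (m == swp l)%:R * A k m)); last first.
  move=> m _; rewrite swapF_entry mulrC.
  have -> : (l == swp m) = (m == swp l) by apply/eqP/eqP => ->; rewrite swpK.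
  done.
by rewrite (@sum_delta _ (swp l)).
Qed.

Lemma phi_swap z x a c : phi z x c a = (-1) ^+ (z && x) * phi z x a c.
Proof.
by case: z; case: x; case: a; case: c; rewrite /phi /= ?expr0 ?expr1; ring.
Qed.

Lemma vb_swap n (adj : rel 'I_n) b k i :
  vb adj b (swp k) i =
  (\prod_(j < n) (-1) ^+ (parity_code adj b j && b j)) * vb adj b k i.
Proof.
rewrite !mxE copy1_swp copy2_swp -big_split /=.
by apply: eq_bigr => j _; rewrite phi_swap.
Qed.

Lemma Om_swap n (adj : rel 'I_n) k l :
  Omega_g adj (swp k) (swp l) = Omega_g adj k l.
Proof.
rewrite !OmE_entry; apply: eq_bigr => b _; rewrite !vb_swap.
set e := \prod_(j < n) _.
have he : e * e = 1 by rewrite /e -big_split /=; apply: big1 => j _; rewrite sign_sq.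
transitivity ((e * e) * (vb adj b k 0 * vb adj b l 0)); first by ring.
by rewrite he mul1r.
Qed.

Lemma F_Om_F n (adj : rel 'I_n) : swapF n *m Omega_g adj *m swapF n = Omega_g adj.
Proof. by apply/matrixP => k l; rewrite mulF_r mulF_l Om_swap. Qed.

Lemma F_F n : swapF n *m swapF n = 1%:M.
Proof. by apply/matrixP => k l; rewrite mulF_l swapF_entry swpK mxE eq_sym. Qed.

Lemma tensE m1 m2 p1 p2 (A : 'M[algC]_(m1, p1)) (B : 'M[algC]_(m2, p2)) k l :
  (A *t B) k l = A (mxtens_unindex k).1 (mxtens_unindex l).1 *
                 B (mxtens_unindex k).2 (mxtens_unindex l).2.
Proof. by rewrite mxE. Qed.

Lemma idx1 {m} (v : 'cV[algC]_m) u (x : 'I_1) : v u x = v u 0.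
Proof. by rewrite [x]ord1. Qed.

Lemma braketE m (u v : 'cV[algC]_m) : braket u v = \sum_i (u i 0)^* * v i 0.
Proof. by rewrite /braket mxE; apply: eq_bigr => i _; rewrite !mxE. Qed.
Lemma Om_GW n (adj : rel 'I_n) (Hg : simple_graph adj) (w : 'cV[algC]_(2 ^ n)) :
  Omega_g adj *m (graph_state adj *t w) =
  braket (graph_state adj) w *: (graph_state adj *t graph_state adj).
Proof.
apply/matrixP => k i; rewrite mxE [RHS]mxE tensE braketE.
rewrite (idx1 (graph_state adj)) [graph_state adj _ (mxtens_unindex i).2](idx1 (graph_state adj)).
rewrite -(@key n adj Hg k (fun u => w u 0)).
by apply: eq_bigr => m _; rewrite tensE (idx1 (graph_state adj)) (idx1 w).
Qed.

Lemma Om_WG n (adj : rel 'I_n) (Hg : simple_graph adj) (w : 'cV[algC]_(2 ^ n)) :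
  Omega_g adj *m (w *t graph_state adj) =
  braket (graph_state adj) w *: (graph_state adj *t graph_state adj).
Proof.
apply/matrixP => k i; rewrite mxE [RHS]mxE tensE braketE.
rewrite (idx1 (graph_state adj)) [graph_state adj _ (mxtens_unindex i).2](idx1 (graph_state adj)).
rewrite (reindex_inj (can_inj (@swpK n))) /=.
transitivity (\sum_m Omega_g adj (swp k) m *
   (graph_state adj (copy1 m) 0 * (fun u => w u 0) (copy2 m))).
  apply: eq_bigr => m _; rewrite tensE (idx1 (graph_state adj)) (idx1 w).
  have e := @Om_swap n adj (swp k) m; rewrite swpK in e; rewrite e; congr (_ * _).
  rewrite (@copy1_swp n m : (mxtens_unindex (swp m)).1 = copy2 m).
  rewrite (@copy2_swp n m : (mxtens_unindex (swp m)).2 = copy1 m).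
  exact: mulrC.
rewrite (@key n adj Hg (swp k) (fun u => w u 0)) copy1_swp copy2_swp.
congr (_ * _); exact: mulrC.
Qed.

Lemma Gnorm n (adj : rel 'I_n) : braket (graph_state adj) (graph_state adj) = 1.
Proof.
rewrite braketE (eq_bigr (fun _ => sp n * sp n)); last first.
  move=> u _; rewrite conj_G G_entry.
  transitivity (sp n * sp n * (sg adj (beta u) * sg adj (beta u))); first by ring.
  by rewrite sg_sq mulr1.
rewrite sumr_const card_ord sp_sq -(mulr_natr (((2 ^ n)%:R)^-1)) mulVf //.
by rewrite pnatr_eq0 -lt0n expn_gt0.
Qed.

Lemma dagG_G n (adj : rel 'I_n) :
  dag (graph_state adj) *m graph_state adj = 1%:M.
Proof.
apply/matrixP => i j; rewrite !ord1 [RHS]mxE eqxx mulr1n.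
exact: Gnorm.
Qed.

Lemma Om_Ppsi n (adj : rel 'I_n) (Hg : simple_graph adj) :
  Omega_g adj *m Ppsi (graph_state adj) = 0.
Proof.
set G := graph_state adj.
set B := 1%:M - G *m dag G.
have hB : dag G *m B = 0.
  by rewrite /B mulmxBr mulmx1 mulmxA dagG_G mul1mx subrr.
apply/matrixP => k l; rewrite mxE [RHS]mxE.
transitivity ((G (mxtens_unindex l).1 0)^* * \sum_m Omega_g adj k m *
   (G (copy1 m) 0 * (fun u => B u (mxtens_unindex l).2) (copy2 m))).
  rewrite mulr_sumr; apply: eq_bigr => m _; rewrite tensE.
  rewrite [(G *m _) _ _]mxE big_ord1 [dag G _ _]mxE [map_mx _ _ _ _]mxE.
  rewrite (idx1 G (mxtens_unindex m).1 ord0) (idx1 G (mxtens_unindex l).1 ord0).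
  rewrite /B /copy1 /copy2; ring.
rewrite /G (@key n adj Hg k (fun u => B u (mxtens_unindex l).2)) -/G.
have -> : \sum_u (G u 0)^* * B u (mxtens_unindex l).2 = 0.
  move: hB => /matrixP /(_ 0 (mxtens_unindex l).2); rewrite !mxE => h.
  rewrite -[RHS]h; apply: eq_bigr => u _; by rewrite !mxE.
by rewrite mul0r mulr0.
Qed.

Lemma largest0 m : (0 < m)%N -> largest_eigenvalue (0 : 'M[algC]_m) 0.
Proof.
move=> hm; split.
  apply/eigenvalueP; exists (const_mx 1); first by rewrite mulmx0 scale0r.
  apply/eqP => /matrixP /(_ 0 (Ordinal hm)); rewrite !mxE => /eqP.
  by rewrite oner_eq0.
move=> a /eigenvalueP [v hv nz].
move: hv; rewrite mulmx0 => /esym /eqP; rewrite scaler_eq0 (negbTE nz) orbF.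
by move/eqP ->.
Qed.
Theorem mainTheorem6 (n : nat) (adj : rel 'I_n) (Hg : simple_graph adj) :
  let G := graph_state adj in
  let Om := Omega_g adj in
  (* (i) *)
  (orth_proj Om /\ swapF n *m Om *m swapF n = Om) /\
  (* (ii) *)
  ((forall omega : 'cV[algC]_(2 ^ n), is_state omega ->
      Om *m (G *t omega) = braket G omega *: (G *t G) /\
      Om *m (omega *t G) = braket G omega *: (G *t G)) /\
   Om *m (G *t G) = G *t G) /\
  (* (iii) *)
  (sym_two_copy_strategy G Om /\
   Om *m Ppsi G = 0 /\ Om *m Psym n *m Ppsi G = 0 /\
   lambda_star G Om 0 /\ gamma_star G Om 0 /\ xi_star G Om 0).
Proof.
move=> G Om.
have hproj : orth_proj Om by split; [exact: Om_idem | exact: Om_herm].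
have hF : swapF n *m Om *m swapF n = Om by exact: F_Om_F.
have hGG : Om *m (G *t G) = G *t G by rewrite /Om /G Om_GW // Gnorm scale1r.
have h0 : Om *m Ppsi G = 0 by exact: Om_Ppsi.
have hOF : Om *m swapF n = swapF n *m Om.
  by rewrite -{1}hF -mulmxA F_F mulmx1.
have hPs : Om *m Psym n *m Ppsi G = 0.
  rewrite /Psym -scalemxAr mulmxDr mulmx1 hOF -scalemxAl mulmxDl -mulmxA h0.
  by rewrite mulmx0 addr0 scaler0.
have hpos : (0 < 2 ^ n * 2 ^ n)%N by rewrite muln_gt0 expn_gt0.
split; first by split.
split.
  split => // omega _; split; [exact: Om_GW | exact: Om_WG].
split.
  split => //; first exact: proj_psd.
  exact: proj_psd (@proj_compl _ _ hproj).
split => //; split => //.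
split.
  rewrite /lambda_star -!mulmxA.
  have -> : Om *m (Psym n *m Ppsi G) = 0 by rewrite mulmxA.
  by rewrite !mulmx0 scaler0; exact: largest0.
split.
  by rewrite /gamma_star -mulmxA h0 mulmx0; exact: largest0.
by rewrite /xi_star -mulmxA h0 mulmx0; exact: largest0.
Qed.
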